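(* Let $(\mathcal{X},\rho)$ be a metric space and $0<\varepsilon<1/32$. Let $x_1,\dots,x_m\in\mathcal{X}$ with labels $y_1,\dots,y_m\in\{-1,1\}$, let $S^+=\{x_i:y_i=1\}$ and $S^-=\{x_i:y_i=-1\}$ be both nonempty, and assume $\rho(S^+,S^-)>0$. Define $$f(x)=\min_{i\in[m]}T\Big(y_i+\frac{2\rho(x,x_i)}{\rho(S^+,S^-)}\Big),$$ where $T(z)=\max\{-1,\min\{1,z\}\}$. Let $\tilde\rho$ be a number with $1\le\tilde\rho/\rho(S^+,S^-)\le1+\varepsilon$. For $x\in\mathcal{X}$, let $a^+,a^-\in[m]$ be any indices with $x_{a^+}\in S^+$, $x_{a^-}\in S^-$, $\rho(x,x_{a^+})\le(1+\varepsilon)\rho(x,S^+)$ and $\rho(x,x_{a^-})\le(1+\varepsilon)\rho(x,S^-)$, and define $$\tilde f(x)=\min_{a\in\{a^+,a^-\}}T\Big(y_a+\frac{2\rho(x,x_a)}{\tilde\rho}\Big).$$ Then $|f(x)-\tilde f(x)|\le2\varepsilon$ for every $x\in\mathcal{X}$ (for any such choice of $a^+,a^-$).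
   Context: $\rho(A,B)=\inf_{a\in A,b\in B}\rho(a,b)$ and $\rho(x,A)=\inf_{a\in A}\rho(x,a)$. *)

(* Defs.v *)
From Stdlib Require Import Reals List.
Import ListNotations.
Open Scope R_scope.

Definition is_metric {X : Type} (rho : X -> X -> R) : Prop :=
  (forall a b, 0 <= rho a b) /\
  (forall a b, rho a b = 0 <-> a = b) /\
  (forall a b, rho a b = rho b a) /\
  (forall a b c, rho a c <= rho a b + rho b c).

(* Minimum of a finite nonempty list of reals (= its infimum); 0 on nil. *)
Definition minl (l : list R) : R :=
  match l with
  | nil => 0
  | a :: t => fold_left Rmin t a
  end.

Definition T (z : R) : R := Rmax (-1) (Rmin 1 z).

Definition Reqb (a b : R) : bool := if Req_EM_T a b then true else false.

(* Indices i in [m] = {0,...,m-1} with label y_i = s. *)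
Definition idx_lab (m : nat) (y : nat -> R) (s : R) : list nat :=
  filter (fun i => Reqb (y i) s) (seq 0 m).

(* rho(z, S^s) = inf_{i : y_i = s} rho(z, x_i)  (finite, so a min). *)
Definition dist_pt {X : Type} (rho : X -> X -> R) (m : nat) (x : nat -> X)
  (y : nat -> R) (s : R) (z : X) : R :=
  minl (map (fun i => rho z (x i)) (idx_lab m y s)).

Definition dist_sets {X : Type} (rho : X -> X -> R) (m : nat) (x : nat -> X)
  (y : nat -> R) : R :=
  minl (flat_map (fun i => map (fun j => rho (x i) (x j)) (idx_lab m y (-1)))
                 (idx_lab m y 1)).

Definition f_full {X : Type} (rho : X -> X -> R) (m : nat) (x : nat -> X)
  (y : nat -> R) (z : X) : R :=
  minl (map (fun i => T (y i + 2 * rho z (x i) / dist_sets rho m x y)) (seq 0 m)).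

Definition f_approx {X : Type} (rho : X -> X -> R) (x : nat -> X)
  (y : nat -> R) (rt : R) (ap an : nat) (z : X) : R :=
  Rmin (T (y ap + 2 * rho z (x ap) / rt)) (T (y an + 2 * rho z (x an) / rt)).

(* Main.v *)
Require Import Defs.
From Stdlib Require Import Reals List Lra Lia.
Open Scope R_scope.

Lemma fold_min_le : forall t a, fold_left Rmin t a <= a /\ forall b, In b t -> fold_left Rmin t a <= b.
Proof.
  induction t as [|c t IH]; intros a; simpl.
  - split; [lra| tauto].
  - destruct (IH (Rmin a c)) as [H1 H2]. split.
    + pose proof (Rmin_l a c); lra.
    + intros b [<-|Hb]. pose proof (Rmin_r a c); lra. auto.
Qed.

Lemma fold_min_in : forall t a, fold_left Rmin t a = a \/ In (fold_left Rmin t a) t.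
Proof.
  induction t as [|c t IH]; intros a; simpl; [auto|].
  destruct (IH (Rmin a c)) as [H|H]; [|auto].
  rewrite H. unfold Rmin; destruct (Rle_dec a c); auto.
Qed.

Lemma minl_le : forall l b, In b l -> minl l <= b.
Proof.
  intros [|a t] b H; [destruct H|]. simpl.
  destruct (fold_min_le t a) as [H1 H2]. destruct H as [<-|H]; auto.
Qed.

Lemma minl_in : forall l, l <> nil -> In (minl l) l.
Proof.
  intros [|a t] H; [congruence|]. simpl.
  destruct (fold_min_in t a) as [E|E]; [left; auto| right; auto].
Qed.

Lemma idx_lab_In : forall m y s i, In i (idx_lab m y s) <-> (i < m)%nat /\ y i = s.
Proof.
  intros. unfold idx_lab. rewrite filter_In, in_seq. unfold Reqb.
  destruct (Req_EM_T (y i) s); split; intros; try lia; intuition; try congruence.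
Qed.

Lemma T_lip : forall a b c, a <= b + c -> 0 <= c -> T a <= T b + c.
Proof.
  intros. unfold T, Rmax, Rmin.
  repeat (destruct Rle_dec); lra.
Qed.

Lemma T_bounds : forall a, -1 <= T a <= 1.
Proof. intros. unfold T, Rmax, Rmin. repeat (destruct Rle_dec); lra. Qed.

Lemma T_ge1 : forall a, 1 <= a -> T a = 1.
Proof. intros. unfold T, Rmax, Rmin. repeat (destruct Rle_dec); lra. Qed.

Theorem mainTheorem6 (X : Type) (rho : X -> X -> R) (eps : R)
  (m : nat) (x : nat -> X) (y : nat -> R) (rt : R) :
  is_metric rho ->
  0 < eps -> eps < 1 / 32 ->
  (forall i, (i < m)%nat -> y i = 1 \/ y i = -1) ->
  (exists i, (i < m)%nat /\ y i = 1) ->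
  (exists i, (i < m)%nat /\ y i = -1) ->
  0 < dist_sets rho m x y ->
  1 <= rt / dist_sets rho m x y <= 1 + eps ->
  forall (z : X) (ap an : nat),
    (ap < m)%nat -> y ap = 1 ->
    (an < m)%nat -> y an = -1 ->
    rho z (x ap) <= (1 + eps) * dist_pt rho m x y 1 z ->
    rho z (x an) <= (1 + eps) * dist_pt rho m x y (-1) z ->
    Rabs (f_full rho m x y z - f_approx rho x y rt ap an z) <= 2 * eps.
Proof.
  intros [Hnn _] He0 He1 Hy _ _ HD Hrt z ap an Hap Hyap Han Hyan _ Hr.
  set (D := dist_sets rho m x y) in *.
  set (w := dist_pt rho m x y (-1) z) in *.
  set (r := rho z (x an)) in *.
  assert (Hw : exists j, In j (idx_lab m y (-1)) /\ w = rho z (x j)).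
  { assert (Hne : map (fun i => rho z (x i)) (idx_lab m y (-1)) <> nil).
    { intro E. assert (In an (idx_lab m y (-1))) by (apply idx_lab_In; auto).
      apply (in_map (fun i => rho z (x i))) in H. rewrite E in H. destruct H. }
    apply minl_in in Hne. apply in_map_iff in Hne. destruct Hne as [j [E Hj]].
    exists j. split. exact Hj. unfold w, dist_pt. now rewrite E. }
  destruct Hw as [j [Hj Ewj]].
  assert (Hwmin : forall k, In k (idx_lab m y (-1)) -> w <= rho z (x k)).
  { intros k Hk. apply minl_le. apply in_map_iff. exists k; auto. }
  assert (Hwr : w <= r) by (apply Hwmin, idx_lab_In; auto).
  assert (Hw0 : 0 <= w) by (rewrite Ewj; apply Hnn).
  set (u := w / D).
  assert (Hf : f_full rho m x y z = T (-1 + 2 * u)).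
  { unfold f_full. fold D.
    assert (Hne : map (fun i => T (y i + 2 * rho z (x i) / D)) (seq 0 m) <> nil).
    { destruct m; [lia|]. simpl. congruence. }
    apply Rle_antisym.
    - apply idx_lab_In in Hj as [Hjm Hyj].
      replace (T (-1 + 2 * u)) with (T (y j + 2 * rho z (x j) / D)).
      2:{ rewrite Hyj, <- Ewj. unfold u. f_equal. unfold Rdiv; ring. }
      apply minl_le. apply in_map_iff. exists j. split; auto. apply in_seq; lia.
    - pose proof (minl_in _ Hne) as Hin. apply in_map_iff in Hin.
      destruct Hin as [k [E Hk]]. rewrite <- E. apply in_seq in Hk.
      destruct (Hy k ltac:(lia)) as [Hyk|Hyk]; rewrite Hyk.
      + rewrite (T_ge1 (1 + _)). apply T_bounds.
        assert (0 <= 2 * rho z (x k) / D).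
        { unfold Rdiv. apply Rmult_le_pos. pose proof (Hnn z (x k)); lra.
          left; apply Rinv_0_lt_compat; auto. }
        lra.
      + assert (w <= rho z (x k)) by (apply Hwmin, idx_lab_In; split; [lia|auto]).
        pose proof (T_lip (-1 + 2 * u) (-1 + 2 * rho z (x k) / D) 0).
        assert (u <= rho z (x k) / D).
        { unfold u, Rdiv. apply Rmult_le_compat_r; auto. left; apply Rinv_0_lt_compat; auto. }
        assert (-1 + 2 * u <= -1 + 2 * rho z (x k) / D + 0).
        { unfold Rdiv in *. lra. }
        specialize (H0 H2 ltac:(lra)). lra. }
  assert (Hg : f_approx rho x y rt ap an z = T (-1 + 2 * (r / rt))).
  { unfold f_approx. rewrite Hyap, Hyan. fold r.
    rewrite (T_ge1 (1 + _)).
    - pose proof (T_bounds (-1 + 2 * r / rt)). unfold Rmin.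
      replace (2 * (r / rt)) with (2 * r / rt) by (unfold Rdiv; ring). destruct Rle_dec; lra.
    - assert (0 <= 2 * rho z (x ap) / rt).
      { assert (0 < rt).
        { destruct Hrt as [Hrt _].
          assert (rt = rt / D * D) by (field; lra). nra. }
        unfold Rdiv. apply Rmult_le_pos. pose proof (Hnn z (x ap)); lra.
        left; apply Rinv_0_lt_compat; auto. }
      lra. }
  rewrite Hf, Hg.
  set (v := r / rt).
  assert (HrtD : D <= rt <= (1 + eps) * D).
  { destruct Hrt as [H1 H2]. assert (rt = rt / D * D) by (field; lra). nra. }
  destruct HrtD as [HrtD1 HrtD2].
  assert (Hrt0 : 0 < rt) by lra.
  assert (Eu : u * D = w) by (unfold u; field; lra).
  assert (Ev : v * rt = r) by (unfold v; field; lra).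
  assert (Hu0 : 0 <= u) by (unfold u, Rdiv; apply Rmult_le_pos; [lra| left; apply Rinv_0_lt_compat; auto]).
  assert (Hv1 : v <= (1 + eps) * u).
  { apply (Rmult_le_reg_r rt); auto. rewrite Ev.
    assert (u*D <= u*rt) by (apply Rmult_le_compat_l; lra).
    assert ((1+eps)*(u*D) <= (1+eps)*(u*rt)) by (apply Rmult_le_compat_l; lra).
    replace ((1 + eps) * u * rt) with ((1+eps)*(u*rt)) by ring. rewrite Eu in H0. lra. }
  assert (Hv0 : 0 <= v) by (unfold v, Rdiv; apply Rmult_le_pos; [lra| left; apply Rinv_0_lt_compat; auto]).
  assert (Hv2 : u <= (1 + eps) * v).
  { apply (Rmult_le_reg_r D); auto. rewrite Eu.
    assert (v*rt <= v*((1+eps)*D)) by (apply Rmult_le_compat_l; lra).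
    replace ((1 + eps) * v * D) with (v*((1+eps)*D)) by ring. lra. }
  apply Rabs_le; split.
  -
    destruct (Rle_dec 1 u).
    + rewrite (T_ge1 (-1 + 2 * u)) by lra. pose proof (T_bounds (-1 + 2 * v)). lra.
    + pose proof (T_lip (-1 + 2 * v) (-1 + 2 * u) (2 * eps)). nra.
  - destruct (Rle_dec 1 u).
    + rewrite (T_ge1 (-1 + 2 * u)) by lra.
      assert (1 - eps <= v) by nra.
      pose proof (T_lip 1 (-1 + 2 * v) (2 * eps)).
      rewrite (T_ge1 1) in H0 by lra. nra.
    + pose proof (T_lip (-1 + 2 * u) (-1 + 2 * v) (2 * eps)). nra.
Qed.
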